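(* Let $P$ be a non-abelian exponent-critical $p$-group of type $\mathcal{A}$, let $p^m=\exp(P)$, and let $A$ be a maximal subgroup of $P$ containing an element of order $p^m$. Then: (i) $A$ is abelian, normal in $P$, and contains all elements of $P$ of order $p^m$; (ii) $A\cong Z_{p^m}\times S$ for some group $S$ of exponent dividing $p^{m-1}$; (iii) $P'$ is abelian of exponent dividing $p^{m-1}$.
   Context: A finite group $G$ is exponent-critical if $\exp(G)$ is not the least common multiple of the exponents of the proper non-abelian subgroups of $G$. An exponent-critical $p$-group is of type $\mathcal{A}$ if it has exactly one abelian maximal subgroup. $Z_{p^m}$ denotes the cyclic group of order $p^m$. *)

(* Defs.v *)
From mathcomp Require Import all_boot all_fingroup all_solvable.
Set Implicit Arguments. Unset Strict Implicit. Unset Printing Implicit Defensive.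
Local Open Scope group_scope.

(* exp(G) is not the lcm of the exponents of the proper non-abelian
   subgroups of G (the lcm over an empty family is 1). *)
Definition exponent_critical (gT : finGroupType) (G : {set gT}) : bool :=
  exponent G != \big[lcmn/1%N]_(H : {group gT} | (H \proper G) && ~~ abelian H)
                  exponent H.

Definition type_A (gT : finGroupType) (G : {set gT}) : bool :=
  #|[set M : {group gT} | maximal M G && abelian M]| == 1%N.

(* Main.v *)
Require Import Defs.
From mathcomp Require Import all_boot all_fingroup all_solvable.
Local Open Scope group_scope.

Theorem mainTheorem12 (gT : finGroupType) (p m : nat) (P A : {group gT}) (a : gT) :
  prime p -> p.-group P -> ~~ abelian P ->
  exponent_critical P -> type_A P ->
  exponent P = (p ^ m)%N ->
  maximal A P -> a \in A -> #[a] = (p ^ m)%N ->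
  [/\ (abelian A /\ A <| P /\ forall x, x \in P -> #[x] = (p ^ m)%N -> x \in A),
      (exists C S : {group gT},
          [/\ C \x S = A, cyclic C, #|C| = (p ^ m)%N & exponent S %| p ^ m.-1]) &
      (abelian P^`(1) /\ exponent P^`(1) %| p ^ m.-1)].
Proof.
move=> pr_p pP nabP crit tA eP maxA Aa oa.
set L := \big[lcmn/1%N]_(H : {group gT} | (H \proper P) && ~~ abelian H) exponent H.
have LP : L %| p ^ m.
  apply/dvdn_biglcmP => H /andP[prH _]; rewrite -eP; exact: exponentS (proper_sub prH).
have Lm : L %| p ^ m.-1.
  case/(dvdn_pfactor _ _ pr_p): LP => j lejm defL.
  have : j != m by apply: contra crit => /eqP ej; rewrite /exponent_critical eP -/L defL ej.
  move=> njm; rewrite defL dvdn_Pexp2l ?prime_gt1 //.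
  have : j < m by rewrite ltn_neqAle njm lejm.
  by case: (m).
have key : forall H : {group gT}, H \proper P -> ~~ abelian H -> exponent H %| p ^ m.-1.
  move=> H prH nH; apply: dvdn_trans Lm.
  by move/dvdn_biglcmP: (dvdnn L); apply; rewrite prH nH.
have m_gt0 : 0 < m.
  rewrite lt0n; apply/negP => /eqP m0; case/negP: nabP.
  have /eqP P1 : P :==: 1 by rewrite trivg_exponent eP m0.
  by rewrite P1 abelian1.
have notdiv : ~~ (p ^ m %| p ^ m.-1).
  by rewrite dvdn_Pexp2l ?prime_gt1 //; case: (m) m_gt0 => //= n _; rewrite ltnn.
have abel_of : forall (H : {group gT}) x, H \proper P -> x \in H -> #[x] = (p ^ m)%N -> abelian H.
  move=> H x prH xH ox; apply/negPn/negP => nH.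
  by case/negP: notdiv; rewrite -ox (dvdn_trans (dvdn_exponent xH) (key H prH nH)).
have abA : abelian A := abel_of A a (maxgroupp maxA) Aa oa.
have uniqA : forall M : {group gT}, maximal M P -> abelian M -> M = A.
  move=> M maxM abM; case/cards1P: tA => B defB.
  have : A \in [set B] by rewrite -defB inE maxA abA.
  have : M \in [set B] by rewrite -defB inE maxM abM.
  by rewrite !inE => /eqP -> /eqP ->.
have nP_cyc : forall y, y \in P -> exists2 M : {group gT}, maximal M P & y \in M.
  move=> y Py; have := cycle_subG y P; rewrite Py => syP.
  case: (maximal_exists syP) => [defP | [M maxM syM]].
    by case/negP: nabP; rewrite -defP cycle_abelian.
  by exists M; rewrite // -cycle_subG.
have allA : forall x, x \in P -> #[x] = (p ^ m)%N -> x \in A.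
  move=> x Px ox; have [M maxM xM] := nP_cyc x Px.
  by rewrite -(uniqA M maxM (abel_of M x (maxgroupp maxM) xM ox)).
have nAP : A <| P := p_maximal_normal pP maxA.
have [y Py nAy] : exists2 y, y \in P & y \notin A.
  by case/properP: (maxgroupp maxA) => _ [y Py nAy]; exists y.
have [M maxM yM] := nP_cyc y Py.
have MA : M != A :> {set gT} by apply/eqP => MA; rewrite -MA yM in nAy.
have nabM : ~~ abelian M by apply: contra MA => abM; rewrite (uniqA M maxM abM).
have eM := key M (maxgroupp maxM) nabM.
have derPhi : P^`(1) \subset 'Phi(P) by rewrite (Phi_joing pP) joing_subl.
have dM : P^`(1) \subset M := subset_trans derPhi (Phi_sub_max maxM).
have dA : P^`(1) \subset A := subset_trans derPhi (Phi_sub_max maxA).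
split=> //; last first.
  by split; [exact: abelianS dA abA | exact: dvdn_trans (exponentS dM) eM].
have sAP : A \subset P := proper_sub (maxgroupp maxA).
have expA : #[a] = exponent A.
  apply/eqP; rewrite eqn_dvd dvdn_exponent //= oa -eP exponentS //.
case/splitsP: (abelian_splits Aa expA abA) => K /complP [tI defA].
have sKA : K \subset A by rewrite -defA mulG_subr.
have caK : K \subset 'C(<[a]>) by apply: subset_trans sKA _; apply: sub_abelian_cent; rewrite ?cycle_subG.
exists <[a]>%G, K; split.
- by rewrite dprodE.
- exact: cycle_cyclic.
- by [].
set N := (A :&: M)%G.
have eN : exponent N %| p ^ m.-1 by apply: dvdn_trans eM; apply: exponentS; apply: subsetIr.
have nsAM : ~~ (A \subset M).
  apply/negP => sAM; case/maxgroupP: maxA => _ mA.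
  by case/eqP: MA; apply: mA => //; exact: maxgroupp maxM.
have iN : #|A : N| = p.
  rewrite /N /= indexgI -indexMg (mulg_normal_maximal (p_maximal_normal pP maxM) maxM sAP nsAM).
  exact: p_maximal_index pP maxM.
have maxN : maximal N A.
  by apply: p_index_maximal; rewrite ?subsetIl ?iN // (pgroupS sAP pP).
have caN : N \subset 'C(<[a]>).
  by apply: subset_trans (subsetIl A M) _; apply: sub_abelian_cent; rewrite ?cycle_subG.
have defH : <[a]> * N = A.
  have sHA : <[a]> <*> N \subset A by rewrite join_subG cycle_subG Aa subsetIl.
  rewrite -cent_joinEr //; apply/eqP; rewrite eqEproper sHA /=; apply/negP => prH.
  case/maxgroupP: maxN => _ mN.
  have HN := mN (<[a]> <*> N)%G prH (joing_subr _ _).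
  have aN : a \in N by rewrite -HN /= -cycle_subG joing_subl.
  case/negP: notdiv; rewrite -oa (dvdn_trans (dvdn_exponent aN) eN) //.
apply/exponentP => s Ks.
have As : s \in A by apply: (subsetP sKA).
rewrite -defH in As; case/mulsgP: As => u v au Nv defs; rewrite defs.
have Au : u \in A by apply: (subsetP _ u au); rewrite cycle_subG.
have Av : v \in A by move: Nv; rewrite inE => /andP[].
rewrite expgMn; last by apply: (centsP abA).
have -> : v ^+ (p ^ m.-1) = 1 by apply: (exponentP eN).
rewrite mulg1.
have : u ^+ (p ^ m.-1) \in <[a]> :&: K.
  rewrite inE groupX //=.
  have -> : u ^+ (p ^ m.-1) = (u * v) ^+ (p ^ m.-1).
    by rewrite expgMn ?(exponentP eN v Nv) ?mulg1 //; apply: (centsP abA).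
  by rewrite -defs groupX.
by rewrite tI inE => /eqP.
Qed.
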